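(* Let $G$ be a cograph whose edge connectivity is exactly $k$, and let $X$ be the set of vertices of degree $k$ in $G$. Then every set $E_{ca}\subseteq E(\overline{G})$ such that $G\cup E_{ca}$ is $(k+1)$-edge connected satisfies $|E_{ca}|\geq\rho(\overline{G}[X])$.
   Context: A cograph is a graph that can be built from single vertices by repeatedly taking disjoint unions and joins; equivalently a graph with no induced path on four vertices. $\overline{G}$ is the complement of $G$, $\overline{G}[X]$ the subgraph of $\overline{G}$ induced by $X$, and $G\cup F=(V(G),E(G)\cup F)$. The edge connectivity of a connected graph is the least size of a set of edges whose removal disconnects it; a graph is $k$-edge connected if its edge connectivity is $k$. An edge cover of a graph is a set of edges such that every vertex is incident to at least one of them. For a graph $H$: if $H$ is connected with at least two vertices, $\rho(H)$ is the minimum cardinality of an edge cover of $H$; for a trivial (one-vertex) component $H_i$, $\rho(H_i)=1$; if $H$ has components $H_1,\ldots,H_r$, $\rho(H)=\sum_i\rho(H_i)$. *)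

(* Defs.v *)
From mathcomp Require Import all_boot.
Set Implicit Arguments. Unset Strict Implicit. Unset Printing Implicit Defensive.

(* A finite simple graph on the vertex type T is given by its edge set
   E : {set {set T}}, each edge being a 2-element subset of T. *)
Section Graphs.
Variable T : finType.

Definition is_graph (E : {set {set T}}) : Prop :=
  forall e, e \in E -> #|e| = 2.

Definition adj (E : {set {set T}}) : rel T :=
  fun u v => (u != v) && ([set u; v] \in E).

Definition deg (E : {set {set T}}) (v : T) : nat := #|[set u | adj E v u]|.

Definition connectedg (E : {set {set T}}) : Prop :=
  forall u v : T, connect (adj E) u v.

Definition edge_connectivity (E : {set {set T}}) (k : nat) : Prop :=
  [/\ connectedg E,
      exists F : {set {set T}}, [/\ F \subset E, #|F| = k & ~ connectedg (E :\: F)]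
    & forall F : {set {set T}}, F \subset E -> ~ connectedg (E :\: F) -> k <= #|F|].

Definition cograph (E : {set {set T}}) : Prop :=
  forall a b c d : T, uniq [:: a; b; c; d] ->
    ~ [/\ adj E a b, adj E b c, adj E c d &
          [/\ ~~ adj E a c, ~~ adj E b d & ~~ adj E a d]].

Definition compl_edges (E : {set {set T}}) : {set {set T}} :=
  [set e : {set T} | (#|e| == 2) && (e \notin E)].

Definition induced_edges (E : {set {set T}}) (X : {set T}) : {set {set T}} :=
  [set e in E | e \subset X].

Definition min_edge_cover (Ed : {set {set T}}) (C : {set T}) : nat :=
  \big[minn/#|Ed|]_(F in powerset Ed | [forall v in C, exists e in F, v \in e]) #|F|.

(* connected components of the graph with vertex set X and edge set H
   (H is assumed to only contain edges inside X) *)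
Definition components (X : {set T}) (H : {set {set T}}) : {set {set T}} :=
  [set [set v | connect (adj H) u v] | u in X].

Definition rho (X : {set T}) (H : {set {set T}}) : nat :=
  \sum_(C in components X H)
     (if #|C| == 1 then 1 else min_edge_cover (induced_edges H C) C).

End Graphs.

(* Main.v *)
Require Import Defs.
From mathcomp Require Import all_boot.

Lemma bigmin_le (I : eqType) (r : seq I) (P : pred I) (F : I -> nat) m i0 :
  i0 \in r -> P i0 -> \big[minn/m]_(i <- r | P i) F i <= F i0.
Proof.
elim: r => //= a r IH; rewrite inE big_cons => /orP[/eqP -> Pa|ir Pi].
  by rewrite Pa geq_minl.
case: (P a); last exact: IH.
exact: leq_trans (geq_minr _ _) (IH ir Pi).
Qed.

Lemma adj_sym (T : finType) (E : {set {set T}}) : symmetric (adj E).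
Proof. by move=> u v; rewrite /adj eq_sym setUC. Qed.

Lemma connect_noedge (T : finType) (e : rel T) v u :
  (forall z, ~~ e v z) -> connect e v u -> u = v.
Proof.
move=> H /connectP[[|z p] /= Hp ->] //.
by move: Hp; rewrite (negbTE (H z)).
Qed.

Lemma connect_closed (T : finType) (e : rel T) (X : {set T}) u v :
  (forall a b, e a b -> b \in X) -> u \in X -> connect e u v -> v \in X.
Proof.
move=> HX uX /connectP[p]; elim/last_ind: p => [_ -> //|p z _].
by rewrite rcons_path last_rcons => /andP[_ /HX] ? ->.
Qed.

Lemma pair_eq (T : finType) (e : {set T}) a b :
  #|e| = 2 -> a \in e -> b \in e -> a != b -> e = [set a; b].
Proof.
move=> ce ae be ab; apply/eqP; rewrite eq_sym eqEcard subUset !sub1set ae be.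
by rewrite cards2 ab ce.
Qed.

Arguments bigmin_le {I r P F m i0}.
Arguments adj_sym {T}.
Arguments connect_noedge {T e v u}.
Arguments connect_closed {T e X u v}.
Arguments pair_eq {T e a b}.

Theorem lemma7 (T : finType) (E : {set {set T}}) (k : nat) :
  is_graph E -> cograph E -> edge_connectivity E k ->
  forall Eca : {set {set T}},
    Eca \subset compl_edges E ->
    edge_connectivity (E :|: Eca) k.+1 ->
    rho [set v | deg E v == k] (induced_edges (compl_edges E) [set v | deg E v == k])
      <= #|Eca|.
Proof.
move=> gE _ [_ [F0 [_ _ discF0]] _] Eca EcaC [_ _ minG'].
set X := [set v | deg E v == k].
set H := induced_edges (compl_edges E) X.
have two : forall v : T, exists u, u != v.
  move=> v; case: (boolP [exists u, u != v]) => [/existsP//|].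
  rewrite negb_exists => /forallP Hn; exfalso; apply: discF0 => a b.
  have ea : a = v by apply/eqP; move: (Hn a); rewrite negbK.
  have eb : b = v by apply/eqP; move: (Hn b); rewrite negbK.
  by rewrite ea eb connect0.
have Eca2 : forall e, e \in Eca -> #|e| = 2.
  by move=> e /(subsetP EcaC); rewrite inE => /andP[/eqP].
have A : forall v, v \in X -> exists2 e, e \in Eca & v \in e.
  move=> v; rewrite inE => /eqP dv.
  case: (boolP [exists e in Eca, v \in e]) => [/existsP[e /andP[? ?]]|]; first by exists e.
  rewrite negb_exists => /forallP noE; exfalso.
  pose F := [set e in E :|: Eca | v \in e].
  have : k.+1 <= #|F|.
    apply: minG'; first by apply/subsetP => e; rewrite inE => /andP[].
    have [u nuv] := two v.
    move=> Hc; move: (Hc v u) => /connect_noedge H'.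
    suff : u = v by move/eqP; rewrite (negbTE nuv).
    apply: H' => z; apply/negP; rewrite /adj in_setD => /andP[_ /andP[nF Ein]].
    by move: nF; rewrite inE Ein set21.
  apply/negP; rewrite -ltnNge ltnS -dv.
  apply: leq_trans (leq_imset_card (fun u => [set v; u]) [set u | adj E v u]).
  apply: subset_leq_card; apply/subsetP => e; rewrite inE => /andP[eE ve].
  move: eE; rewrite inE => /orP[eE|eC]; last by move: (noE e); rewrite eC ve.
  move: (gE e eE) => /eqP/cards2P[a [b [ab ee]]].
  move: ve; rewrite ee !inE => /orP[/eqP va|/eqP vb].
    apply/imsetP; exists b; last by rewrite va.
    by rewrite inE /adj va ab -ee eE.
  apply/imsetP; exists a; last by rewrite vb setUC.
  by rewrite inE /adj vb eq_sym ab setUC -ee eE.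
have symH : connect_sym (adj H) := sym_connect_sym (adj_sym H).
have HX : forall a b, adj H a b -> b \in X.
  move=> a b /andP[_]; rewrite inE => /andP[_ /subsetP]; apply; exact: set22.
have clsX : forall u w, u \in X -> connect (adj H) u w -> w \in X.
  by move=> u w uX; apply: connect_closed HX uX.
pose meets (e C : {set T}) := [exists x in C, x \in e].
have uniqC : forall e C1 C2, e \in Eca -> C1 \in components X H -> C2 \in components X H ->
    meets e C1 -> meets e C2 -> C1 = C2.
  move=> e C1 C2 eE /imsetP[u1 u1X ->] /imsetP[u2 u2X ->].
  move=> /existsP[x1 /andP[]]; rewrite inE => h1 x1e.
  move=> /existsP[x2 /andP[]]; rewrite inE => h2 x2e.
  have c12 : connect (adj H) x1 x2.
    case: (eqVneq x1 x2) => [->|ne]; first exact: connect0.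
    apply: connect1; rewrite /adj ne /= -(pair_eq (Eca2 e eE) x1e x2e ne).
    rewrite inE (subsetP EcaC _ eE) /= (pair_eq (Eca2 e eE) x1e x2e ne).
    by rewrite subUset !sub1set (clsX _ _ u1X h1) (clsX _ _ u2X h2).
  apply/setP => w; rewrite !inE (same_connect symH h1) (same_connect symH h2).
  by rewrite (same_connect symH c12).
rewrite /rho.
apply: (@leq_trans (\sum_(C in components X H) \sum_(e in Eca) meets e C)).
  apply: leq_sum => C CC.
  pose Aset := [set e in Eca | meets e C].
  have -> : \sum_(e in Eca) meets e C = #|Aset|.
    rewrite -sum1_card big_mkcond [RHS]big_mkcond; apply: eq_bigr => e _; rewrite !inE.
    by case: (e \in Eca); case: (meets e C).
  case/imsetP: CC => u uX CE.
  have uC : u \in C by rewrite CE inE connect0.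
  have CX : C \subset X by apply/subsetP => w; rewrite CE inE; apply: clsX.
  case: ifP => C1.
    have [e eE ue] := A u uX.
    apply/card_gt0P; exists e; rewrite inE eE /=; apply/existsP; exists u.
    by rewrite uC ue.
  have ex : forall x, x \in C -> exists f, (f \in induced_edges H C) && (x \in f).
    move=> x xC.
    have : 0 < #|C :\ x|.
      move: (cardsD1 x C); rewrite xC add1n => cC.
      have : 0 < #|C| by apply/card_gt0P; exists u.
      by move: C1; rewrite cC ltnS lt0n eqSS => ->.
    case/card_gt0P => w; rewrite in_setD1 => /andP[wx wC].
    have cxw : connect (adj H) x w.
      move: xC wC; rewrite CE !inE => ux uw.
      by rewrite -(same_connect symH ux).
    case/connectP: cxw => [[|z p]] /=; first by move=> _ ew; rewrite ew eqxx in wx.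
    case/andP => xz _ _.
    exists [set x; z]; rewrite set21 andbT inE.
    move: (xz) => /andP[_ ->] /=.
    rewrite subUset !sub1set xC /=.
    move: xC; rewrite CE !inE => ux.
    by rewrite (same_connect symH ux) connect1.
  pose pe := fun e : {set T} => if e \subset C then e
     else odflt set0 [pick f in induced_edges H C | [exists x in C, (x \in e) && (x \in f)]].
  rewrite /min_edge_cover.
  apply: leq_trans (leq_imset_card pe Aset); apply: (bigmin_le (i0 := pe @: Aset)).
    exact: mem_index_enum.
  apply/andP; split.
    rewrite powersetE; apply/subsetP => f0 /imsetP[e eA ->].
    move: eA; rewrite inE => /andP[eE /existsP[x /andP[xC xe]]].
    rewrite /pe; case: ifP => eC.
      rewrite inE eC andbT inE (subsetP EcaC _ eE) /=.
      exact: subset_trans eC CX.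
    case: pickP => [f' /andP[] //|none].
    have [f /andP[fI xf]] := ex x xC.
    have hx : [exists y in C, (y \in e) && (y \in f)] by apply/existsP; exists x; rewrite xC xe xf.
    by move: (none f); rewrite /= fI hx.
  apply/forallP => v; apply/implyP => vC.
  have [e eE ve] := A v (subsetP CX v vC).
  have eA : e \in Aset by rewrite inE eE /=; apply/existsP; exists v; rewrite vC ve.
  apply/existsP; exists (pe e); rewrite imset_f //=.
  rewrite /pe; case: ifP => eC //.
  case: pickP => [f /andP[_ /existsP[z /and3P[zC ze zf]]] | none].
    case: (eqVneq z v) => [<- //|zv].
    move: eC; rewrite (pair_eq (Eca2 e eE) ze ve zv) subUset !sub1set zC vC.
    by [].
  have [f /andP[fI vf]] := ex v vC.
  have hx : [exists y in C, (y \in e) && (y \in f)] by apply/existsP; exists v; rewrite vC ve vf.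
  by move: (none f); rewrite /= fI hx.
rewrite exchange_big /= -sum1_card; apply: leq_sum => e eE.
case: (boolP [exists C in components X H, meets e C]) => [/existsP [C0 /andP[C0c m0]] | ].
  rewrite (bigD1 C0) //= m0 big1 // => C /andP[Cc neC]; rewrite /meets.
  apply/eqP; rewrite eqb0; apply: contra neC => mC; apply/eqP; exact: (uniqC e C C0 eE Cc C0c mC m0).
rewrite negb_exists => /forallP none.
rewrite big1 // => C Cc; apply/eqP; rewrite /meets eqb0.
by move: (none C); rewrite Cc.
Qed.
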